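(* Let $\Gamma$ and $\Gamma'$ be LJB-contexts such that $\Gamma\longrightarrow\Gamma'$ by one step of the cleaning rewrite system, and let $A$ be a formula. Let $\Delta\vdash E$ be a flattening of the LJB-sequent $\Gamma\vdash A$ and $\Delta'\vdash E'$ be a flattening of $\Gamma'\vdash A$. Then $\Delta\vdash E$ has a derivation in LJ$^{+}$ if and only if $\Delta'\vdash E'$ has a derivation in LJ$^{+}$, and the derivations have the same height.
   Context: Minimal predicate logic: terms $t ::= x \mid f(t_1,\dots,t_n)$, formulas $A ::= P(t_1,\dots,t_n)\mid A\rightarrow A\mid \forall x\,A$. LJ$^{+}$-sequents $\Delta\vdash E$: $\Delta$ a finite multiset of formulas. LJ$^{+}$ is the sequent calculus (formulas modulo $\alpha$-equivalence) with rules: (L$\rightarrow$) from $\Delta, A_1\rightarrow\dots\rightarrow A_n\rightarrow P\vdash A_i$ ($i=1,\dots,n$, $n\ge0$) infer $\Delta, A_1\rightarrow\dots\rightarrow A_n\rightarrow P\vdash P$, $P$ atomic; (R$\forall$) from $\Delta\vdash A$ infer $\Delta\vdash\forall x\,A$ if $x$ is not free in $\Delta$; (R$\rightarrow$) from $\Delta,A\vdash B$ infer $\Delta\vdash A\rightarrow B$. Height = maximal number of rule instances on a branch. LJB-contexts and items: an LJB-context is a finite multiset of items; an item is a formula or $[\Gamma]_V$ with $V$ a finite set of variables (bound by the bracket) and $\Gamma$ an LJB-context. $FV([\Gamma]_V)=FV(\Gamma)\setminus V$, $BV([\Gamma]_V)=BV(\Gamma)\cup V$, $FV$, $BV$ of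 a context being the unions over its items and of a formula the usual ones. An LJB-sequent $\Gamma\vdash A$ is an LJB-context and a formula. Cleaning rules (applicable anywhere in a context, contexts being multisets): $[I,\Gamma]_V\longrightarrow I,[\Gamma]_V$ if $FV(I)\cap V=\emptyset$; $[\ ]_V\longrightarrow\emptyset$; $I\,I\longrightarrow I$. A fresh $\alpha$-variant of an LJB-sequent is an LJB-sequent $\alpha$-equivalent to it (renaming variables bound by quantifiers or by brackets) in which all bound variables are pairwise distinct and distinct from the free variables. An LJ$^{+}$-sequent is a flattening of an LJB-sequent if it is obtained by erasing all brackets (keeping their contents) in a fresh $\alpha$-variant of it. *)

(* Defs.v *)
(* Locally nameless syntax: quantifier-bound variables are de
   Bruijn indices (so alpha-equivalence of formulas is syntactic equality);
   free variables and bracket-bound variables are named (nat). *)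
From Stdlib Require Import List Arith Permutation.
Import ListNotations.

Inductive term : Type :=
| BVar (n : nat)
| FVar (x : nat)
| Fn (f : nat) (ts : list term).

Inductive form : Type :=
| Atom (p : nat) (ts : list term)
| Imp (A B : form)
| All (A : form).

Fixpoint term_fv (t : term) : list nat :=
  match t with
  | BVar _ => []
  | FVar x => [x]
  | Fn _ ts => flat_map term_fv ts
  end.

Fixpoint form_fv (A : form) : list nat :=
  match A with
  | Atom _ ts => flat_map term_fv ts
  | Imp A B => form_fv A ++ form_fv B
  | All A => form_fv A
  end.

Fixpoint term_lc_at (k : nat) (t : term) : bool :=
  match t with
  | BVar n => n <? k
  | FVar _ => true
  | Fn _ ts => forallb (term_lc_at k) ts
  end.

Fixpoint form_lc_at (k : nat) (A : form) : bool :=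
  match A with
  | Atom _ ts => forallb (term_lc_at k) ts
  | Imp A B => form_lc_at k A && form_lc_at k B
  | All A => form_lc_at (S k) A
  end.

Definition form_lc (A : form) : Prop := form_lc_at 0 A = true.

Fixpoint term_close (k x : nat) (t : term) : term :=
  match t with
  | BVar n => BVar n
  | FVar y => if Nat.eqb y x then BVar k else FVar y
  | Fn f ts => Fn f (map (term_close k x) ts)
  end.

Fixpoint form_close (k x : nat) (A : form) : form :=
  match A with
  | Atom p ts => Atom p (map (term_close k x) ts)
  | Imp A B => Imp (form_close k x A) (form_close k x B)
  | All A => All (form_close (S k) x A)
  end.

Fixpoint term_ren (s : nat -> nat) (t : term) : term :=
  match t with
  | BVar n => BVar n
  | FVar y => FVar (s y)
  | Fn f ts => Fn f (map (term_ren s) ts)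
  end.

Fixpoint form_ren (s : nat -> nat) (A : form) : form :=
  match A with
  | Atom p ts => Atom p (map (term_ren s) ts)
  | Imp A B => Imp (form_ren s A) (form_ren s B)
  | All A => All (form_ren s A)
  end.

(* deriv D E h : the LJ+-sequent D |- E (D a multiset, represented by a list)
   has a derivation of height exactly h (height = maximal number of rule
   instances on a branch). *)
Inductive deriv : list form -> form -> nat -> Prop :=
| d_Limp (D : list form) (As : list form) (p : nat) (ts : list term) (hs : list nat) :
    In (fold_right Imp (Atom p ts) As) D ->
    length hs = length As ->
    (forall i, i < length As -> deriv D (nth i As (Atom p ts)) (nth i hs 0)) ->
    deriv D (Atom p ts) (S (list_max hs))
| d_Rall (D : list form) (A : form) (x : nat) (h : nat) :
    form_lc A ->
    ~ In x (flat_map form_fv D) ->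
    deriv D A h ->
    deriv D (All (form_close 0 x A)) (S h)
| d_Rimp (D : list form) (A B : form) (h : nat) :
    deriv (A :: D) B h ->
    deriv D (Imp A B) (S h).

Inductive item : Type :=
| IForm (A : form)
| IBr (V : list nat) (G : list item).   (* [G]_V, V a finite set of variables *)

Definition ctx := list item.

Definition inb (x : nat) (V : list nat) : bool := existsb (Nat.eqb x) V.

Fixpoint item_fv (I : item) : list nat :=
  match I with
  | IForm A => form_fv A
  | IBr V G => filter (fun x => negb (inb x V)) (flat_map item_fv G)
  end.

Definition ctx_fv (G : ctx) : list nat := flat_map item_fv G.

Fixpoint item_bv (I : item) : list nat :=
  match I with
  | IForm _ => []
  | IBr V G => nodup Nat.eq_dec V ++ flat_map item_bv G
  end.

Definition ctx_bv (G : ctx) : list nat := flat_map item_bv G.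

Fixpoint item_lc (I : item) : Prop :=
  match I with
  | IForm A => form_lc A
  | IBr _ G => fold_right (fun J P => item_lc J /\ P) True G
  end.

Definition ctx_lc (G : ctx) : Prop := Forall item_lc G.

Fixpoint item_ren (s : nat -> nat) (I : item) {struct I} : item :=
  match I with
  | IForm A => IForm (form_ren s A)
  | IBr V G => IBr V (map (item_ren (fun x => if inb x V then x else s x)) G)
  end.

(* alpha-equivalence of items / contexts: renaming of bracket-bound variables,
   contexts being multisets and V being sets (all at any depth). *)
Inductive alpha_item : item -> item -> Prop :=
| ai_form (A : form) : alpha_item (IForm A) (IForm A)
| ai_cong (V V' : list nat) (G G' : ctx) :
    (forall x, In x V <-> In x V') -> alpha_ctx G G' -> alpha_item (IBr V G) (IBr V' G')
| ai_ren (V : list nat) (G : ctx) (s : nat -> nat) :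
    (forall x, ~ In x V -> s x = x) ->
    (forall x y, In x V -> In y V -> s x = s y -> x = y) ->
    (forall x, In x V -> ~ In (s x) (item_fv (IBr V G))) ->
    (forall x, In x V -> ~ In (s x) (ctx_bv G)) ->
    alpha_item (IBr V G) (IBr (map s V) (map (item_ren s) G))
| ai_sym (I J : item) : alpha_item I J -> alpha_item J I
| ai_trans (I J K : item) : alpha_item I J -> alpha_item J K -> alpha_item I K
with alpha_ctx : ctx -> ctx -> Prop :=
| ac_nil : alpha_ctx [] []
| ac_cons (I I' : item) (G G' : ctx) :
    alpha_item I I' -> alpha_ctx G G' -> alpha_ctx (I :: G) (I' :: G')
| ac_perm (G G' : ctx) : Permutation G G' -> alpha_ctx G G'
| ac_trans (G1 G2 G3 : ctx) : alpha_ctx G1 G2 -> alpha_ctx G2 G3 -> alpha_ctx G1 G3.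

(* one step of the cleaning rewrite system, anywhere in a context,
   contexts taken as multisets and modulo alpha *)
Inductive clean_step : ctx -> ctx -> Prop :=
| cs_extract (V : list nat) (I : item) (G R : ctx) :
    (forall x, In x (item_fv I) -> ~ In x V) ->
    clean_step (IBr V (I :: G) :: R) (I :: IBr V G :: R)
| cs_empty (V : list nat) (R : ctx) :
    clean_step (IBr V [] :: R) R
| cs_dup (I : item) (R : ctx) :
    clean_step (I :: I :: R) (I :: R)
| cs_inside (V : list nat) (G G' R : ctx) :
    clean_step G G' -> clean_step (IBr V G :: R) (IBr V G' :: R)
| cs_alpha (G1 G1' G2' G2 : ctx) :
    alpha_ctx G1 G1' -> clean_step G1' G2' -> alpha_ctx G2' G2 -> clean_step G1 G2.

(* fresh alpha-variant condition for the LJB-sequent G |- A: all bracket-bound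
   variables pairwise distinct and distinct from the free variables
   (quantifier-bound variables are nameless, hence automatically fresh) *)
Definition fresh_seq (G : ctx) (A : form) : Prop :=
  NoDup (ctx_bv G) /\
  (forall x, In x (ctx_bv G) -> ~ In x (ctx_fv G ++ form_fv A)).

Fixpoint item_erase (I : item) : list form :=
  match I with
  | IForm A => [A]
  | IBr _ G => flat_map item_erase G
  end.

Definition ctx_erase (G : ctx) : list form := flat_map item_erase G.

Definition flattening (D : list form) (E : form) (G : ctx) (A : form) : Prop :=
  exists G0 : ctx, alpha_ctx G G0 /\ fresh_seq G0 A /\
    Permutation D (ctx_erase G0) /\ E = A.

(* Main.v *)
Require Import Defs.
From Stdlib Require Import List Arith Permutation Lia.
Import ListNotations.

Fixpoint term_ind' (P : term -> Prop) (HB : forall n, P (BVar n)) (HF : forall x, P (FVar x))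
  (HFn : forall f ts, Forall P ts -> P (Fn f ts)) (t : term) : P t :=
  match t with
  | BVar n => HB n
  | FVar x => HF x
  | Fn f ts => HFn f ts ((fix F (l : list term) : Forall P l :=
       match l with
       | [] => Forall_nil _
       | u :: l' => Forall_cons _ (term_ind' P HB HF HFn u) (F l')
       end) ts)
  end.

Lemma map_ext_Forall' {A B} (f g : A -> B) l : Forall (fun u => f u = g u) l -> map f l = map g l.
Proof. induction 1; simpl; f_equal; auto. Qed.

Lemma term_ren_ext s t u : (forall v, In v (term_fv u) -> s v = t v) -> term_ren s u = term_ren t u.
Proof.
  induction u using term_ind'; simpl; intros Hs; auto.
  - f_equal. apply map_ext_Forall'. rewrite Forall_forall in *. intros w Hw.
    apply H; auto. intros v Hv; apply Hs. apply in_flat_map; eauto.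
Qed.

Lemma form_ren_ext s t A : (forall v, In v (form_fv A) -> s v = t v) -> form_ren s A = form_ren t A.
Proof.
  induction A; simpl; intros H.
  - f_equal. apply map_ext_in. intros u Hu. apply term_ren_ext. intros v Hv; apply H.
    apply in_flat_map; eauto.
  - rewrite IHA1, IHA2; auto; intros; apply H; apply in_or_app; auto.
  - rewrite IHA; auto.
Qed.

Lemma term_ren_id u : term_ren (fun x => x) u = u.
Proof.
  induction u using term_ind'; simpl; auto. f_equal.
  induction H; simpl; f_equal; auto.
Qed.

Lemma form_ren_id A : form_ren (fun x => x) A = A.
Proof.
  induction A; simpl; f_equal; auto.
  induction ts; simpl; f_equal; auto using term_ren_id.
Qed.

Lemma term_ren_comp s t u : term_ren t (term_ren s u) = term_ren (fun x => t (s x)) u.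
Proof.
  induction u using term_ind'; simpl; auto. f_equal.
  induction H; simpl; f_equal; auto.
Qed.

Lemma form_ren_comp s t A : form_ren t (form_ren s A) = form_ren (fun x => t (s x)) A.
Proof.
  induction A; simpl; f_equal; auto.
  induction ts; simpl; f_equal; auto using term_ren_comp.
Qed.

Lemma term_lc_ren s k u : term_lc_at k (term_ren s u) = term_lc_at k u.
Proof.
  induction u using term_ind'; simpl; auto.
  induction H; simpl; auto. rewrite H, IHForall; auto.
Qed.

Lemma form_lc_ren s k A : form_lc_at k (form_ren s A) = form_lc_at k A.
Proof.
  revert k; induction A; simpl; intros k; auto.
  - induction ts; simpl; auto. rewrite term_lc_ren, IHts; auto.
  - rewrite IHA1, IHA2; auto.
Qed.

Definition upd (s : nat -> nat) (x z : nat) : nat -> nat :=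
  fun v => if Nat.eqb v x then z else s v.

Lemma term_ren_close s x z k u :
  (forall v, In v (term_fv u) -> v <> x -> s v <> z) ->
  term_ren s (term_close k x u) = term_close k z (term_ren (upd s x z) u).
Proof.
  induction u using term_ind'; simpl; intros Hs; auto.
  - unfold upd. destruct (Nat.eqb x0 x) eqn:E; simpl.
    + rewrite Nat.eqb_refl; auto.
    + destruct (Nat.eqb (s x0) z) eqn:E2; auto.
      apply Nat.eqb_eq in E2. apply Nat.eqb_neq in E. exfalso; eapply Hs; simpl; eauto.
  - f_equal. rewrite !map_map. apply map_ext_Forall'. rewrite Forall_forall in *.
    intros w Hw. apply H; auto. intros v Hv; apply Hs. apply in_flat_map; eauto.
Qed.

Lemma form_ren_close s x z k A :
  (forall v, In v (form_fv A) -> v <> x -> s v <> z) ->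
  form_ren s (form_close k x A) = form_close k z (form_ren (upd s x z) A).
Proof.
  revert k; induction A; simpl; intros k H.
  - f_equal. rewrite !map_map. apply map_ext_in. intros u Hu. apply term_ren_close.
    intros v Hv; apply H. apply in_flat_map; eauto.
  - rewrite IHA1, IHA2; auto; intros; apply H; auto; apply in_or_app; auto.
  - rewrite IHA; auto.
Qed.

Lemma form_ren_fold s P As :
  form_ren s (fold_right Imp P As) = fold_right Imp (form_ren s P) (map (form_ren s) As).
Proof. induction As; simpl; f_equal; auto. Qed.

Lemma list_max_in v l : In v l -> v <= list_max l.
Proof.
  intros H. assert (Hl := proj1 (list_max_le l (list_max l)) (le_n _)).
  rewrite Forall_forall in Hl; auto.
Qed.

Lemma deriv_ren D E h : deriv D E h ->
  forall s D', (forall B, In B D -> In (form_ren s B) D') -> deriv D' (form_ren s E) h.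
Proof.
  induction 1; intros s D' HD.
  - simpl. apply HD in H. rewrite form_ren_fold in H. simpl in H.
    apply (d_Limp D' (map (form_ren s) As) p (map (term_ren s) ts) hs); auto.
    + rewrite length_map; auto.
    + intros i Hi. rewrite length_map in Hi.
      change (Atom p (map (term_ren s) ts)) with (form_ren s (Atom p ts)).
      rewrite map_nth. apply H2; auto.
  - set (z := S (list_max (flat_map form_fv D' ++ map s (form_fv A)))).
    assert (Hz1 : ~ In z (flat_map form_fv D')).
    { intros Hc. assert (z <= list_max (flat_map form_fv D' ++ map s (form_fv A))).
      apply list_max_in, in_or_app; auto. unfold z in H2; lia. }
    assert (Hz2 : forall v, In v (form_fv A) -> v <> x -> s v <> z).
    { intros v Hv _ Hc. assert (z <= list_max (flat_map form_fv D' ++ map s (form_fv A))).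
      apply list_max_in, in_or_app; right; rewrite <- Hc; apply in_map; auto. unfold z in H2; lia. }
    simpl. rewrite (form_ren_close s x z 0 A Hz2).
    apply d_Rall; auto.
    + unfold form_lc. rewrite form_lc_ren; auto.
    + apply IHderiv. intros B0 HB. rewrite (form_ren_ext (upd s x z) s).
      * apply HD; auto.
      * intros v Hv. unfold upd. destruct (Nat.eqb v x) eqn:E; auto.
        apply Nat.eqb_eq in E; subst. exfalso; apply H0. apply in_flat_map; eauto.
  - simpl. apply d_Rimp. apply IHderiv. intros B0 [HB|HB]; subst; simpl; auto.
Qed.

Fixpoint item_mut (P : item -> Prop) (Q : list item -> Prop)
  (HF : forall A, P (IForm A)) (HB : forall V G, Q G -> P (IBr V G))
  (Hn : Q []) (Hc : forall I G, P I -> Q G -> Q (I :: G)) (I : item) : P I :=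
  match I with
  | IForm A => HF A
  | IBr V G => HB V G ((fix F (G : list item) : Q G :=
      match G with
      | [] => Hn
      | J :: G' => Hc J G' (item_mut P Q HF HB Hn Hc J) (F G')
      end) G)
  end.

Definition ctx_mut (P : item -> Prop) (Q : list item -> Prop)
  (HF : forall A, P (IForm A)) (HB : forall V G, Q G -> P (IBr V G))
  (Hn : Q []) (Hc : forall I G, P I -> Q G -> Q (I :: G)) : forall G, Q G :=
  fix F (G : list item) : Q G :=
      match G with
      | [] => Hn
      | J :: G' => Hc J G' (item_mut P Q HF HB Hn Hc J) (F G')
      end.

Inductive inst_item : (nat -> nat) -> item -> list form -> Prop :=
| ii_form s A : inst_item s (IForm A) [form_ren s A]
| ii_br s t V G X : (forall x, ~ In x V -> t x = s x) -> inst_ctx t G X -> inst_item s (IBr V G) X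
with inst_ctx : (nat -> nat) -> ctx -> list form -> Prop :=
| ic_nil s : inst_ctx s [] []
| ic_cons s I G X Y : inst_item s I X -> inst_ctx s G Y -> inst_ctx s (I :: G) (X ++ Y).

Scheme inst_item_ind2 := Induction for inst_item Sort Prop
with inst_ctx_ind2 := Induction for inst_ctx Sort Prop.
Combined Scheme inst_mut from inst_item_ind2, inst_ctx_ind2.

Lemma inb_In x V : inb x V = true <-> In x V.
Proof.
  unfold inb. rewrite existsb_exists. split.
  - intros [y [Hy E]]. apply Nat.eqb_eq in E; subst; auto.
  - intros H; exists x; split; auto. apply Nat.eqb_refl.
Qed.

Lemma inb_false x V : inb x V = false <-> ~ In x V.
Proof.
  rewrite <- inb_In. destruct (inb x V); split; congruence.
Qed.

Lemma item_fv_br x V G : In x (item_fv (IBr V G)) <-> In x (ctx_fv G) /\ ~ In x V.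
Proof.
  simpl. rewrite filter_In. rewrite Bool.negb_true_iff, inb_false. reflexivity.
Qed.

Lemma inst_fv :
  (forall s I X, inst_item s I X -> forall s', (forall x, In x (item_fv I) -> s x = s' x) -> inst_item s' I X) /\
  (forall s G X, inst_ctx s G X -> forall s', (forall x, In x (ctx_fv G) -> s x = s' x) -> inst_ctx s' G X).
Proof.
  apply inst_mut; intros.
  - rewrite (form_ren_ext s s'); [constructor|]. auto.
  - apply (ii_br s' (fun x => if inb x V then t x else s' x)).
    + intros x Hx. apply inb_false in Hx. rewrite Hx; auto.
    + apply H. intros x Hx. destruct (inb x V) eqn:E; auto.
      rewrite e by (apply inb_false; auto). apply H0. apply item_fv_br. split; auto.
      apply inb_false; auto.
  - constructor.
  - constructor.
    + apply H; intros; apply H1; unfold ctx_fv; simpl; apply in_or_app; auto.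
    + apply H0; intros; apply H1; unfold ctx_fv; simpl; apply in_or_app; auto.
Qed.

Definition sW (s : nat -> nat) (W : list nat) : nat -> nat := fun x => if inb x W then x else s x.

Lemma nodup_app_disj {A} (l1 l2 : list A) a : NoDup (l1 ++ l2) -> In a l1 -> ~ In a l2.
Proof.
  induction l1; simpl; intros H Ha; [contradiction|].
  inversion H; subst. destruct Ha as [<-|Ha]; auto.
  intros Hc; apply H2; apply in_or_app; auto.
Qed.

Lemma inB_br x W H : In x W -> In x (item_bv (IBr W H)).
Proof. intros; simpl; apply in_or_app; left; apply nodup_In; auto. Qed.

Definition RP I := forall s t X, (forall x, s x = x \/ ~ In (s x) (item_bv I)) ->
     (inst_item t (item_ren s I) X <-> inst_item (fun x => t (s x)) I X).
Definition RQ G := forall s t X, (forall x, s x = x \/ ~ In (s x) (ctx_bv G)) ->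
     (inst_ctx t (map (item_ren s) G) X <-> inst_ctx (fun x => t (s x)) G X).

Lemma ren_inst : (forall I, RP I) /\ (forall G, RQ G).
Proof.
  assert (HF : forall A, RP (IForm A)).
  { intros A s t X Hs; simpl; split; intros Hi; inversion Hi; subst;
    [rewrite form_ren_comp; apply (ii_form (fun x => t (s x)) A) | rewrite <- (form_ren_comp s t A); apply (ii_form t (form_ren s A))]. }
  assert (Hn : RQ []).
  { intros s t X _; simpl; split; intros Hi; inversion Hi; subst; constructor. }
  assert (Hc : forall I G, RP I -> RQ G -> RQ (I :: G)).
  { intros I G IHI IHG s t X Hs; simpl; split; intros Hi; inversion Hi; subst; constructor;
     [apply (IHI s t X0) | apply (IHG s t Y) | apply (IHI s t X0) | apply (IHG s t Y)]; auto;
     intros x; destruct (Hs x) as [E|E]; auto; right; intros Hc0; apply E;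
     unfold ctx_bv; simpl; apply in_or_app; auto. }
  assert (HB : forall V G, RQ G -> RP (IBr V G)); [|split; [apply (item_mut RP RQ) | apply (ctx_mut RP RQ)]; auto].
  all: intros W H IH s t X Hs; simpl.
  all: assert (HsW : forall x, sW s W x = x \/ ~ In (sW s W x) (ctx_bv H)) by
      (intros x; unfold sW; destruct (inb x W); auto; destruct (Hs x) as [E|E]; auto;
       right; intros Hc0; apply E; simpl; apply in_or_app; auto).
  all: assert (Hout : forall x, ~ In x W -> ~ In (s x) W) by
      (intros x Hx Hc0; destruct (Hs x) as [E|E]; [rewrite E in Hc0; auto | apply E; apply inB_br; auto]).
  all: split; intros Hi; inversion Hi; subst.
  - apply (IH (sW s W) t0 X HsW) in H5.
    apply (ii_br _ (fun x => if inb x W then t0 x else t (s x))).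
    + intros x Hx. apply inb_false in Hx; rewrite Hx; auto.
    + apply (proj2 inst_fv _ _ _ H5). intros x _. unfold sW. match goal with Hq : forall x, ~ In x W -> _ = _ |- _ => rename Hq into H4 end.
      destruct (inb x W) eqn:E; auto. apply H4. apply Hout. apply inb_false; auto.
  - apply (ii_br _ (fun y => if inb y W then t0 y else t y)).
    + intros x Hx. apply inb_false in Hx; rewrite Hx; auto.
    + apply (IH (sW s W) _ X HsW). apply (proj2 inst_fv _ _ _ H5). intros x _. unfold sW. match goal with Hq : forall x, ~ In x W -> _ = _ |- _ => rename Hq into H4 end.
      destruct (inb x W) eqn:E; [rewrite E; auto|].
      assert (E2 : inb (s x) W = false) by (apply inb_false, Hout, inb_false; auto).
      rewrite E2. rewrite H4 by (apply inb_false; auto). reflexivity.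
Qed.

Scheme alpha_item_ind2 := Induction for alpha_item Sort Prop
with alpha_ctx_ind2 := Induction for alpha_ctx Sort Prop.
Combined Scheme alpha_mut from alpha_item_ind2, alpha_ctx_ind2.

Definition AI I J := forall s X, inst_item s I X -> exists Y, inst_item s J Y /\ Permutation X Y.
Definition AC G G' := forall s X, inst_ctx s G X -> exists Y, inst_ctx s G' Y /\ Permutation X Y.

Lemma perm_inst G G' : Permutation G G' -> AC G G'.
Proof.
  induction 1; intros s X Hi.
  - exists X; split; auto.
  - inversion Hi; subst. destruct (IHPermutation s Y H5) as [Y' [H1 H2]].
    exists (X0 ++ Y'); split; [constructor; auto | apply Permutation_app_head; auto].
  - inversion Hi as [|? ? ? Xa Ya Ha Hb]; subst. inversion Hb as [|? ? ? Xb Yb Hc Hd]; subst.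
    exists (Xb ++ (Xa ++ Yb)); split; [repeat constructor; auto|].
    rewrite !app_assoc; apply Permutation_app_tail, Permutation_app_comm.
  - destruct (IHPermutation1 s X Hi) as [Y1 [H1 H2]].
    destruct (IHPermutation2 s Y1 H1) as [Y2 [H3 H4]].
    exists Y2; split; auto. eapply Permutation_trans; eauto.
Qed.

Lemma ren_inv V G s : (forall x, ~ In x V -> s x = x) -> (forall x, In x V -> ~ In (s x) (ctx_bv G)) ->
  forall x, s x = x \/ ~ In (s x) (ctx_bv G).
Proof. intros H1 H4 x. destruct (In_dec Nat.eq_dec x V); auto. Qed.

Lemma ren_br_fwd V G s σ X :
    (forall x, ~ In x V -> s x = x) ->
    (forall x y, In x V -> In y V -> s x = s y -> x = y) ->
    (forall x, In x V -> ~ In (s x) (item_fv (IBr V G))) ->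
    (forall x, In x V -> ~ In (s x) (ctx_bv G)) ->
  inst_item σ (IBr V G) X -> inst_item σ (IBr (map s V) (map (item_ren s) G)) X.
Proof.
  intros H1 H2 H3 H4 Hi. inversion Hi as [|? t ? ? ? Hoff Hct]; subst.
  set (t' := fun y => match find (fun x => Nat.eqb (s x) y) V with Some x => t x | None => σ y end).
  apply (ii_br _ t').
  - intros y Hy. unfold t'. destruct (find _ V) eqn:F; auto.
    apply find_some in F. destruct F as [F1 F2]. apply Nat.eqb_eq in F2. subst.
    exfalso; apply Hy; apply in_map; auto.
  - apply (proj2 (proj2 ren_inst G s t' X (ren_inv V G s H1 H4))).
    apply (proj2 inst_fv _ _ _ Hct). intros x Hx. unfold t'.
    destruct (In_dec Nat.eq_dec x V) as [Hin|Hin].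
    + destruct (find _ V) eqn:F.
      * apply find_some in F. destruct F as [F1 F2]. apply Nat.eqb_eq in F2.
        rewrite (H2 n x); auto.
      * apply (find_none _ _ F) in Hin. rewrite Nat.eqb_refl in Hin; discriminate.
    + rewrite (H1 x Hin). destruct (find _ V) eqn:F.
      * apply find_some in F. destruct F as [F1 F2]. apply Nat.eqb_eq in F2.
        exfalso; apply (H3 n F1). rewrite F2. apply item_fv_br; auto.
      * auto.
Qed.

Lemma ren_br_bwd V G s σ X :
    (forall x, ~ In x V -> s x = x) ->
    (forall x, In x V -> ~ In (s x) (item_fv (IBr V G))) ->
    (forall x, In x V -> ~ In (s x) (ctx_bv G)) ->
  inst_item σ (IBr (map s V) (map (item_ren s) G)) X -> inst_item σ (IBr V G) X.
Proof.
  intros H1 H3 H4 Hi. inversion Hi as [|? t ? ? ? Hoff Hct]; subst.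
  apply (proj1 (proj2 ren_inst G s t X (ren_inv V G s H1 H4))) in Hct.
  apply (ii_br _ (fun x => if inb x V then t (s x) else σ x)).
  - intros x Hx. apply inb_false in Hx. rewrite Hx; auto.
  - apply (proj2 inst_fv _ _ _ Hct). intros x Hx.
    destruct (inb x V) eqn:E; auto. apply inb_false in E. rewrite (H1 x E). apply Hoff.
    intros Hm. apply in_map_iff in Hm. destruct Hm as [x' [Hx' Hx'']].
    apply (H3 x' Hx''). rewrite Hx'. apply item_fv_br; auto.
Qed.

Lemma alpha_inst : (forall I J, alpha_item I J -> AI I J /\ AI J I) /\
  (forall G G', alpha_ctx G G' -> AC G G' /\ AC G' G).
Proof.
  apply alpha_mut; intros.
  - split; intros s X Hi; exists X; split; auto.
  - destruct H as [Ha Hb]. split; intros σ X Hi; inversion Hi as [|? t ? ? ? Hoff Hct]; subst.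
    + destruct (Ha _ _ Hct) as [Y [HY HP]]. exists Y; split; auto.
      apply (ii_br _ t); auto. intros x Hx; apply Hoff; rewrite i; auto.
    + destruct (Hb _ _ Hct) as [Y [HY HP]]. exists Y; split; auto.
      apply (ii_br _ t); auto. intros x Hx; apply Hoff; rewrite <- i; auto.
  - split; intros σ X Hi; exists X; split; auto.
    + eapply ren_br_fwd; eauto.
    + eapply ren_br_bwd; eauto.
  - tauto.
  - destruct H as [H1 H2], H0 as [H3 H4]. split; intros σ X Hi.
    + destruct (H1 _ _ Hi) as [Y [HY HP]]. destruct (H3 _ _ HY) as [Z [HZ HP2]].
      exists Z; split; auto. eapply Permutation_trans; eauto.
    + destruct (H4 _ _ Hi) as [Y [HY HP]]. destruct (H2 _ _ HY) as [Z [HZ HP2]].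
      exists Z; split; auto. eapply Permutation_trans; eauto.
  - split; intros σ X Hi; exists X; auto.
  - destruct H as [H1 H2], H0 as [H3 H4]. split; intros σ X Hi; inversion Hi as [|? ? ? Xa Ya Ha Hb]; subst.
    + destruct (H1 _ _ Ha) as [Y1 [HY1 HP1]]. destruct (H3 _ _ Hb) as [Y2 [HY2 HP2]].
      exists (Y1 ++ Y2); split; [constructor; auto | apply Permutation_app; auto].
    + destruct (H2 _ _ Ha) as [Y1 [HY1 HP1]]. destruct (H4 _ _ Hb) as [Y2 [HY2 HP2]].
      exists (Y1 ++ Y2); split; [constructor; auto | apply Permutation_app; auto].
  - split; apply perm_inst; auto. apply Permutation_sym; auto.
  - destruct H as [H1 H2], H0 as [H3 H4]. split; intros σ X Hi.
    + destruct (H1 _ _ Hi) as [Y [HY HP]]. destruct (H3 _ _ HY) as [Z [HZ HP2]].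
      exists Z; split; auto. eapply Permutation_trans; eauto.
    + destruct (H4 _ _ Hi) as [Y [HY HP]]. destruct (H2 _ _ HY) as [Z [HZ HP2]].
      exists Z; split; auto. eapply Permutation_trans; eauto.
Qed.

Definition Cl G G' := forall s X, inst_ctx s G X -> exists Y, inst_ctx s G' Y /\ incl Y X.

Lemma perm_incl {A} (l m : list A) : Permutation l m -> incl m l.
Proof. intros H a Ha. apply Permutation_in with m; auto. apply Permutation_sym; auto. Qed.

Lemma clean_inst G G' : clean_step G G' -> Cl G G' /\ Cl G' G.
Proof.
  induction 1; split; intros σ X Hi.
  - inversion Hi as [|? ? ? XB XR HB HR]; subst.
    inversion HB as [|? t ? ? ? Hoff Hct]; subst.
    inversion Hct as [|? ? ? XI XG HI HG]; subst.
    exists (XI ++ (XG ++ XR)). split.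
    + constructor.
      * apply (proj1 inst_fv _ _ _ HI). intros x Hx. apply Hoff. apply H; auto.
      * constructor; auto. apply (ii_br _ t); auto.
    + rewrite app_assoc. apply incl_refl.
  - inversion Hi as [|? ? ? XI XR' HI HR']; subst.
    inversion HR' as [|? ? ? XB XR HB HR]; subst.
    inversion HB as [|? t ? ? ? Hoff Hct]; subst.
    exists ((XI ++ XB) ++ XR). split.
    + constructor; auto. apply (ii_br _ t); auto. constructor; auto.
      apply (proj1 inst_fv _ _ _ HI). intros x Hx. symmetry; apply Hoff. apply H; auto.
    + rewrite app_assoc. apply incl_refl.
  - inversion Hi as [|? ? ? XB XR HB HR]; subst.
    inversion HB as [|? t ? ? ? Hoff Hct]; subst.
    inversion Hct; subst. exists XR; split; auto. apply incl_refl.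
  - exists ([] ++ X). split.
    + constructor; auto. apply (ii_br _ σ); auto. constructor.
    + apply incl_refl.
  - inversion Hi as [|? ? ? X1 XR' H1 HR']; subst.
    inversion HR' as [|? ? ? X2 X3 H2 H3]; subst.
    exists (X1 ++ X3). split; [constructor; auto|].
    apply incl_app_app; [apply incl_refl| apply incl_appr, incl_refl].
  - inversion Hi as [|? ? ? X1 X3 H1 H3]; subst.
    exists (X1 ++ (X1 ++ X3)). split; [repeat constructor; auto|].
    apply incl_app; [apply incl_appl, incl_refl | apply incl_refl].
  - destruct IHclean_step as [IH1 IH2].
    inversion Hi as [|? ? ? XB XR HB HR]; subst.
    inversion HB as [|? t ? ? ? Hoff Hct]; subst.
    destruct (IH1 _ _ Hct) as [Y [HY HI]].
    exists (Y ++ XR); split; [constructor; auto; apply (ii_br _ t); auto|].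
    apply incl_app_app; auto. apply incl_refl.
  - destruct IHclean_step as [IH1 IH2].
    inversion Hi as [|? ? ? XB XR HB HR]; subst.
    inversion HB as [|? t ? ? ? Hoff Hct]; subst.
    destruct (IH2 _ _ Hct) as [Y [HY HI]].
    exists (Y ++ XR); split; [constructor; auto; apply (ii_br _ t); auto|].
    apply incl_app_app; auto. apply incl_refl.
  - destruct IHclean_step as [IH1 IH2].
    destruct (proj2 alpha_inst _ _ H) as [A1 A2].
    destruct (proj2 alpha_inst _ _ H1) as [A3 A4].
    destruct (A1 _ _ Hi) as [Y1 [HY1 HP1]].
    destruct (IH1 _ _ HY1) as [Y2 [HY2 HI2]].
    destruct (A3 _ _ HY2) as [Y3 [HY3 HP3]].
    exists Y3; split; auto. intros a Ha. apply perm_incl in HP1. apply HP1, HI2.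
    apply (perm_incl _ _ HP3); auto.
  - destruct IHclean_step as [IH1 IH2].
    destruct (proj2 alpha_inst _ _ H) as [A1 A2].
    destruct (proj2 alpha_inst _ _ H1) as [A3 A4].
    destruct (A4 _ _ Hi) as [Y1 [HY1 HP1]].
    destruct (IH2 _ _ HY1) as [Y2 [HY2 HI2]].
    destruct (A2 _ _ HY2) as [Y3 [HY3 HP3]].
    exists Y3; split; auto. intros a Ha. apply perm_incl in HP1. apply HP1, HI2.
    apply (perm_incl _ _ HP3); auto.
Qed.

Definition EP I := forall s, inst_item s I (map (form_ren s) (item_erase I)).
Definition EQ G := forall s, inst_ctx s G (map (form_ren s) (ctx_erase G)).

Lemma erase_inst : forall G, EQ G.
Proof.
  apply (ctx_mut EP EQ).
  - intros A s; simpl; constructor.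
  - intros V G IH s. apply (ii_br _ s); auto; apply IH.
  - intros s; constructor.
  - intros I G H1 H2 s. unfold ctx_erase; simpl. rewrite map_app. constructor; auto; apply H2.
Qed.

Definition FP I := forall B v, In B (item_erase I) -> In v (form_fv B) -> In v (item_fv I) \/ In v (item_bv I).
Definition FQ G := forall B v, In B (ctx_erase G) -> In v (form_fv B) -> In v (ctx_fv G) \/ In v (ctx_bv G).

Lemma erase_fv : (forall I, FP I) /\ (forall G, FQ G).
Proof.
  assert (H1 : forall A, FP (IForm A)).
  { intros A B v [HB|[]] Hv; subst; simpl; auto. }
  assert (H2 : forall V G, FQ G -> FP (IBr V G)).
  { intros V G IH B v HB Hv. destruct (IH B v HB Hv) as [H|H].
    - destruct (In_dec Nat.eq_dec v V).
      + right. apply inB_br; auto.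
      + left. apply item_fv_br; auto.
    - right. simpl. apply in_or_app; auto. }
  assert (H3 : FQ []) by (intros B v [] ).
  assert (H4 : forall I G, FP I -> FQ G -> FQ (I :: G)).
  { intros I G HI HG B v HB Hv. unfold ctx_erase in HB; simpl in HB. apply in_app_or in HB.
    unfold ctx_fv, ctx_bv; simpl. destruct HB as [HB|HB].
    - destruct (HI B v HB Hv); [left|right]; apply in_or_app; auto.
    - destruct (HG B v HB Hv); [left|right]; apply in_or_app; auto. }
  split; [apply (item_mut FP FQ) | apply (ctx_mut FP FQ)]; auto.
Qed.

Lemma gen :
  (forall σ I Y, inst_item σ I Y -> NoDup (item_bv I) ->
     (forall x, In x (item_bv I) -> ~ In x (item_fv I)) ->
     exists s, (forall x, ~ In x (item_bv I) -> s x = σ x) /\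
       forall B, In B (item_erase I) -> In (form_ren s B) Y) /\
  (forall σ G Y, inst_ctx σ G Y -> NoDup (ctx_bv G) ->
     (forall x, In x (ctx_bv G) -> ~ In x (ctx_fv G)) ->
     exists s, (forall x, ~ In x (ctx_bv G) -> s x = σ x) /\
       forall B, In B (ctx_erase G) -> In (form_ren s B) Y).
Proof.
  apply inst_mut; intros.
  - exists s; split; auto. intros B [HB|[]]; subst; simpl; auto.
  - simpl in H0. 
    destruct H as [s' [Hs1 Hs2]].
    + eapply NoDup_app_remove_l; eauto.
    + intros x Hx Hf. destruct (In_dec Nat.eq_dec x V).
      * apply (nodup_app_disj _ _ x H0); auto. apply nodup_In; auto.
      * apply (H1 x). simpl; apply in_or_app; auto. apply item_fv_br; auto.
    + exists s'; split; auto. intros x Hx. rewrite Hs1.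
      * apply e. intros Hc; apply Hx. apply inB_br; auto.
      * intros Hc; apply Hx; simpl; apply in_or_app; auto.
  - exists s; split; auto.
  - unfold ctx_bv, ctx_fv in *; simpl in *. fold (ctx_bv G) (ctx_fv G) in *.
    destruct H as [s1 [Hs1 Hs1']].
    { eapply NoDup_app_remove_r; eauto. }
    { intros x Hx Hf. apply (H2 x); apply in_or_app; auto. }
    destruct H0 as [s2 [Hs2 Hs2']].
    { eapply NoDup_app_remove_l; eauto. }
    { intros x Hx Hf. apply (H2 x); apply in_or_app; auto. }
    exists (fun x => if In_dec Nat.eq_dec x (item_bv I) then s1 x else s2 x). split.
    + intros x Hx. destruct (In_dec Nat.eq_dec x (item_bv I)).
      * exfalso; apply Hx; apply in_or_app; auto.
      * apply Hs2. intros Hc; apply Hx; apply in_or_app; auto.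
    + intros B HB. unfold ctx_erase in HB; simpl in HB. apply in_or_app. apply in_app_or in HB.
      destruct HB as [HB|HB].
      * left. erewrite form_ren_ext; [apply Hs1'; eauto|]. intros v Hv.
        destruct (In_dec Nat.eq_dec v (item_bv I)); auto.
        destruct (proj1 erase_fv I B v HB Hv) as [Hf|Hf]; [|contradiction].
        rewrite Hs1, Hs2; auto. intros Hc. apply (H2 v); apply in_or_app; auto.
      * right. erewrite form_ren_ext; [apply Hs2'; eauto|]. intros v Hv.
        destruct (In_dec Nat.eq_dec v (item_bv I)); auto. exfalso.
        destruct (proj2 erase_fv G B v HB Hv) as [Hf|Hf].
        -- apply (H2 v); apply in_or_app; auto.
        -- apply (nodup_app_disj _ _ v H1); auto.
Qed.

Lemma dir G G' G0 G0' A D D' h : alpha_ctx G G0 -> fresh_seq G0 A -> Permutation D (ctx_erase G0) ->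
  alpha_ctx G' G0' -> Permutation D' (ctx_erase G0') -> Cl G' G -> deriv D A h -> deriv D' A h.
Proof.
  intros Ha Hf Hp Ha' Hp' Hc Hd.
  destruct (proj2 alpha_inst _ _ Ha') as [_ A2].
  destruct (proj2 alpha_inst _ _ Ha) as [A1 _].
  pose proof (erase_inst G0' (fun x => x)) as E.
  destruct (A2 _ _ E) as [Y1 [HY1 HP1]].
  destruct (Hc _ _ HY1) as [Y2 [HY2 HI2]].
  destruct (A1 _ _ HY2) as [Y3 [HY3 HP3]].
  destruct Hf as [Hnd Hfr].
  destruct (proj2 gen _ _ _ HY3 Hnd (fun x Hx Hc => Hfr x Hx (in_or_app _ _ _ (or_introl Hc)))) as [s [Hs1 Hs2]].
  assert (HA : form_ren s A = A).
  { rewrite <- (form_ren_id A) at 2. apply form_ren_ext. intros v Hv. apply Hs1.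
    intros Hc'. apply (Hfr v Hc'). apply in_or_app; auto. }
  rewrite <- HA. apply (deriv_ren _ _ _ Hd). intros B HB.
  apply (Permutation_in _ Hp) in HB. apply Hs2 in HB.
  apply (perm_incl _ _ HP3) in HB. apply HI2 in HB. apply (perm_incl _ _ HP1) in HB.
  apply in_map_iff in HB. destruct HB as [B' [HB1 HB2]]. rewrite form_ren_id in HB1. rewrite <- HB1.
  apply (Permutation_in _ (Permutation_sym Hp')); auto.
Qed.

Theorem proposition4 (G G' : ctx) (A : form) (D D' : list form) (E E' : form) :
  ctx_lc G -> form_lc A ->
  clean_step G G' ->
  flattening D E G A ->
  flattening D' E' G' A ->
  forall h : nat, deriv D E h <-> deriv D' E' h.
Proof.
  intros _ _ Hstep [G0 [Ha [Hf [Hp ->]]]] [G0' [Ha' [Hf' [Hp' ->]]]] h.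
  destruct (clean_inst _ _ Hstep) as [C1 C2].
  split; intro Hd.
  - exact (dir G G' G0 G0' A D D' h Ha Hf Hp Ha' Hp' C2 Hd).
  - exact (dir G' G G0' G0 A D' D h Ha' Hf' Hp' Ha Hp C1 Hd).
Qed.
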